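(* Let $(I,d,(I_n)_n)$ be a uniform metric index set, $W$ a compact Hausdorff space and $m:X^{\mathbb{R}}\to C^*(W)$ a sequence measure function with associated operator measure function $\overline{m}$. Then for any two non-expansive operators $T_1,T_2\in B(\ell^2(I))$, $\overline{m}(T_1T_2)=\overline{m}(T_2T_1)$.
   Context: $I$ is countable with nested finite subsets $I_1\subset I_2\subset\cdots$, $\bigcup_nI_n=I$, and a quasi-distance $d$ (i.e. $d\ge0$, $d(i,i)=0$, symmetric, triangle inequality); $B_R(i)=\{j:d(j,i)\le R\}$. $(I,d,(I_n))$ is a uniform metric index set if $\sup_i|B_R(i)|<\infty$ for all $R>0$ and $\lim_{n\to\infty}|(\bigcup_{j\in I\setminus I_n}B_R(j))\cap I_n|/|I_n|=0$ for all $R>0$. $\{\delta_i\}$ is the canonical basis of $\ell^2(I)$; $A\in B(\ell^2(I))$ is row non-expansive if for every $\varepsilon>0$ there is $N$ with $\sum_{j\notin B_N(i)}|\langle A\delta_i,\delta_j\rangle|^2<\varepsilon$ for all $i$, and non-expansive if $A$ and $A^*$ are row non-expansive. Frame compatible sequences: nonnegative $\mathbf{x}$ with $0\le x_1\le|I_1|$, $0\le x_i-x_{i-1}\le|I_i\setminus I_{i-1}|$; $X$ their set, $X^+=\{c\mathbf{x}\}_{c\ge0}$, $X^{\mathbb{R}}=X^+-X^+$. $\mathbf{x}\approx\mathbf{y}$ iff $\lim(x_n-y_n)/|I_n|=0$; $\mathbf{y}\leqq\mathbf{x}$ iff $\liminf(x_n-y_n)/|I_n|\ge0$. $C^*(W)$: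 real continuous functions on $W$. A sequence measure function is a linear $m:X^{\mathbb{R}}\to C^*(W)$ with $m(\mathbf{x})=m(\mathbf{y})\iff\mathbf{x}\approx\mathbf{y}$ on $X^{\mathbb{R}}$, $m(\mathbf{x})\le m(\mathbf{y})\iff\mathbf{x}\leqq\mathbf{y}$ on $X^+$, and $m((|I_1|,|I_2|,\dots))=1$. For $T\in B(\ell^2(I))$ let $b(T)=(\sum_{i\in I_n}\langle T\delta_i,\delta_i\rangle)_n$; its real and imaginary parts lie in $X^{\mathbb{R}}$. The operator measure function is $\overline{m}(T)=m(\operatorname{Re}b(T))+i\,m(\operatorname{Im}b(T))$ (a complex-valued continuous function on $W$). *)

(* Defs.v *)
From HB Require Import structures.
From mathcomp Require Import all_boot all_order all_algebra.
From mathcomp Require Import all_classical all_reals all_analysis.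
From mathcomp Require Import finmap complex.
Import Order.TTheory GRing.Theory Num.Theory.
Import numFieldNormedType.Exports.
Set Implicit Arguments. Unset Strict Implicit. Unset Printing Implicit Defensive.

Local Open Scope ring_scope.
Local Open Scope classical_set_scope.

Section Defs.
Context {R : realType} {I : countType}.

(** ** Uniform metric index sets.
    The paper's I_1 ⊂ I_2 ⊂ ... is [In 0], [In 1], ... (index shifted by one). *)

Definition nested_exhaustion (In : nat -> {fset I}) : Prop :=
  (forall n, (In n `<=` In n.+1)%fset) /\ (forall i, exists n, i \in In n).

Definition quasi_distance (d : I -> I -> R) : Prop :=
  [/\ forall i j, 0 <= d i j,
      forall i, d i i = 0,
      forall i j, d i j = d j i
    & forall i j k, d i k <= d i j + d j k].

Definition ball_idx (d : I -> I -> R) (r : R) (i : I) : set I := [set j | d j i <= r].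

Definition cardI (In : nat -> {fset I}) (n : nat) : R := (#|` In n|)%:R.

Definition boundary_idx (d : I -> I -> R) (In : nat -> {fset I}) (r : R) (n : nat)
  : {fset I} :=
  [fset i in In n | `[< exists j, j \notin In n /\ d i j <= r >] ]%fset.

Definition uniform_metric_index_set (d : I -> I -> R) (In : nat -> {fset I}) : Prop :=
  [/\ nested_exhaustion In, quasi_distance d,
      (* sup_i |B_r(i)| < oo : all balls of radius r have at most M elements *)
      (forall r, 0 < r -> exists M : nat, forall i (s : seq I),
          uniq s -> all (fun j => d j i <= r) s -> (size s <= M)%N)
    & (forall r, 0 < r ->
          (fun n : nat => (#|` boundary_idx d In r n|)%:R / cardI In n : R) @ \oo --> 0)].

Definition frame_compatible (In : nat -> {fset I}) (x : nat -> R) : Prop :=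
  [/\ forall n, 0 <= x n,
      0 <= x 0%N <= cardI In 0
    & forall n, 0 <= x n.+1 - x n <= (#|` (In n.+1 `\` In n)%fset|)%:R].

Definition Xplus (In : nat -> {fset I}) (x : nat -> R) : Prop :=
  exists c (y : nat -> R), [/\ 0 <= c, frame_compatible In y & x = (fun n => c * y n)].

Definition XR (In : nat -> {fset I}) (x : nat -> R) : Prop :=
  exists y z, [/\ Xplus In y, Xplus In z & x = (fun n => y n - z n)].

Definition seq_approx (In : nat -> {fset I}) (x y : nat -> R) : Prop :=
  (fun n : nat => (x n - y n) / cardI In n : R) @ \oo --> 0.

Definition seq_leqq (In : nat -> {fset I}) (y x : nat -> R) : Prop :=
  (0 <= limn_einf (fun n => ((x n - y n) / cardI In n)%:E))%E.

(** Sequence measure function m : X^R -> C*(W) (m is given as a total function on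
    real sequences; only its values on X^R matter). *)
Definition seq_measure_fun (In : nat -> {fset I}) (W : topologicalType)
  (m : (nat -> R) -> W -> R) : Prop :=
  [/\ forall x, XR In x -> continuous (m x),
      forall (a b : R) x y, XR In x -> XR In y ->
         m (fun n => a * x n + b * y n) = (fun w => a * m x w + b * m y w),
      forall x y, XR In x -> XR In y -> (m x = m y <-> seq_approx In x y),
      forall x y, Xplus In x -> Xplus In y ->
         ((forall w, m x w <= m y w) <-> seq_leqq In x y)
    & m (cardI In) = (fun _ => 1)].

Definition sqmod (z : R[i]) : R := (Normc.normc z) ^+ 2.

Definition l2norm2 (f : I -> R[i]) : \bar R := esum setT (fun i => (sqmod (f i))%:E).

Definition in_l2 (f : I -> R[i]) : Prop := (l2norm2 f < +oo)%E.

Definition delta (i : I) : I -> R[i] := fun j => if j == i then 1 else 0.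

Definition bounded_op (T : (I -> R[i]) -> I -> R[i]) : Prop :=
  [/\ forall f, in_l2 f -> in_l2 (T f),
      forall (a : R[i]) f g, in_l2 f -> in_l2 g ->
         T (fun j => a * f j + g j) = (fun j => a * T f j + T g j)
    & exists K : R, forall f, in_l2 f -> (l2norm2 (T f) <= K%:E * l2norm2 f)%E].

(** <T δ_i, δ_j> = (T δ_i) j *)
Definition op_entry (T : (I -> R[i]) -> I -> R[i]) (i j : I) : R[i] := T (delta i) j.

Definition row_nonexpansive (d : I -> I -> R) (A : (I -> R[i]) -> I -> R[i]) : Prop :=
  forall eps : R, 0 < eps -> exists N : R, forall i,
    (esum (~` ball_idx d N i) (fun j => (sqmod (op_entry A i j))%:E) < eps%:E)%E.

(** row non-expansiveness of A^*, using <A^* δ_i, δ_j> = conj <A δ_j, δ_i>,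
    so |<A^* δ_i, δ_j>| = |op_entry A j i|. *)
Definition adjoint_row_nonexpansive (d : I -> I -> R) (A : (I -> R[i]) -> I -> R[i])
  : Prop :=
  forall eps : R, 0 < eps -> exists N : R, forall i,
    (esum (~` ball_idx d N i) (fun j => (sqmod (op_entry A j i))%:E) < eps%:E)%E.

Definition nonexpansive d A : Prop := row_nonexpansive d A /\ adjoint_row_nonexpansive d A.

Definition bseq (In : nat -> {fset I}) (T : (I -> R[i]) -> I -> R[i]) (n : nat) : R[i] :=
  \sum_(i <- In n) op_entry T i i.

Definition op_measure (In : nat -> {fset I}) (W : topologicalType)
  (m : (nat -> R) -> W -> R) (T : (I -> R[i]) -> I -> R[i]) : W -> R[i] :=
  fun w => (real_complex R (m (fun n => complex.Re (bseq In T n)) w))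
           + 'i * (real_complex R (m (fun n => complex.Im (bseq In T n)) w)).

End Defs.

(* Main.v *)
Require Import Defs.
From HB Require Import structures.
From mathcomp Require Import all_boot all_order all_algebra.
From mathcomp Require Import all_classical all_reals all_analysis.
From mathcomp Require Import finmap complex lra ring.
Import Order.TTheory GRing.Theory Num.Theory.
Import numFieldNormedType.Exports.
Local Open Scope ring_scope.
Local Open Scope classical_set_scope.
Section L.
Context {R : realType} {I : countType}.
Local Notation op := ((I -> R[i]) -> I -> R[i]).

Lemma sqmodE (z : R[i]) : sqmod z = complex.Re z ^+ 2 + complex.Im z ^+ 2.
Proof. by case: z => a b; rewrite /sqmod /= sqr_sqrtr // addr_ge0 // sqr_ge0. Qed.

Lemma sqmod_ge0 (z : R[i]) : 0 <= sqmod z.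
Proof. by rewrite sqmodE addr_ge0 // sqr_ge0. Qed.

Lemma sqmod0 : sqmod (0 : R[i]) = 0.
Proof. by rewrite sqmodE /= expr0n /= addr0. Qed.

Lemma sqmod1 : sqmod (1 : R[i]) = 1.
Proof. by rewrite sqmodE /= expr0n /= expr1n addr0. Qed.

Lemma Re_sq (z : R[i]) : complex.Re z ^+ 2 <= sqmod z.
Proof. by rewrite sqmodE lerDl sqr_ge0. Qed.

Lemma Im_sq (z : R[i]) : complex.Im z ^+ 2 <= sqmod z.
Proof. by rewrite sqmodE lerDr sqr_ge0. Qed.

Lemma l2_term (f : I -> R[i]) i : ((sqmod (f i))%:E <= l2norm2 f)%E.
Proof.
rewrite /l2norm2; apply: esum_ge; exists [set i].
  by split; [exact: finite_set1|].
by rewrite fsbig_set1.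
Qed.

Lemma l2_dom (f h : I -> R[i]) : (forall j, sqmod (h j) <= sqmod (f j)) ->
  (l2norm2 h <= l2norm2 f)%E.
Proof. by move=> H; apply: le_esum => j _; rewrite lee_fin. Qed.

Lemma in_l2_dom (f h : I -> R[i]) : (forall j, sqmod (h j) <= sqmod (f j)) ->
  in_l2 f -> in_l2 h.
Proof. by move=> H; rewrite /in_l2; apply: le_lt_trans; apply: l2_dom. Qed.

Lemma l2_fin (s : {fset I}) (h : I -> R[i]) : (forall j, j \notin s -> h j = 0) ->
  l2norm2 h = (\sum_(k <- s) sqmod (h k))%:E.
Proof.
move=> H; rewrite /l2norm2 -sumEFin.
rewrite (fsbig_seq _ _ (fset_uniq s)).
rewrite -esum_fset; last 2 first.
- exact: finite_seq.
- by move=> i _; rewrite lee_fin sqmod_ge0.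
rewrite [RHS]esum_mkcond; apply: eq_esum => j _.
case: ifPn => //; rewrite notin_setE /= => /negP jn.
by rewrite H ?sqmod0.
Qed.

Lemma in_l2_fin (s : {fset I}) (h : I -> R[i]) : (forall j, j \notin s -> h j = 0) ->
  in_l2 h.
Proof. by move=> H; rewrite /in_l2 (l2_fin _ _ H) ltry. Qed.

Lemma delta_supp (i j : I) : j \notin [fset i]%fset -> @delta R I i j = 0.
Proof. by rewrite inE /delta => /negbTE ->. Qed.

Lemma l2_delta (i : I) : l2norm2 (@delta R I i) = 1%E.
Proof.
by rewrite (l2_fin _ _ (@delta_supp i)) big_seq_fset1 /delta eqxx sqmod1.
Qed.

Lemma in_l2_delta (i : I) : in_l2 (@delta R I i).
Proof. exact: in_l2_fin _ _ (@delta_supp i). Qed.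

Lemma sum_delta_supp (r : seq I) (c : I -> R[i]) j :
  j \notin [fset x in r]%fset -> \sum_(k <- r) c k * delta k j = 0.
Proof.
rewrite inE => jr; rewrite big_seq big1 // => k kr.
rewrite /delta; case: eqP => [ek|]; last by rewrite mulr0.
by rewrite ek kr in jr.
Qed.

Lemma in_l2_sum (r : seq I) (c : I -> R[i]) :
  in_l2 (fun j => \sum_(k <- r) c k * delta k j).
Proof. by apply: (in_l2_fin [fset x in r]%fset) => j; apply: sum_delta_supp. Qed.

Lemma op_sum (T : op) (r : seq I) (c : I -> R[i]) : bounded_op T ->
  T (fun j => \sum_(k <- r) c k * delta k j) =
  (fun j => \sum_(k <- r) c k * T (delta k) j).
Proof.
case=> _ lin _; elim: r => [|x r IH].
  have E : (fun j => \sum_(k <- [::]) c k * @delta R I k j) =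
           (fun j => (-1) * (fun _ => 0 : R[i]) j + (fun _ => 0) j).
    by apply: funext => j; rewrite big_nil mulr0 addr0.
  rewrite E lin; last 2 first.
  - exact: (in_l2_fin fset0).
  - exact: (in_l2_fin fset0).
  by apply: funext => j; rewrite big_nil mulN1r addNr.
have E : (fun j => \sum_(k <- x :: r) c k * @delta R I k j) =
         (fun j => c x * delta x j + (fun j => \sum_(k <- r) c k * delta k j) j).
  by apply: funext => j; rewrite big_cons.
rewrite E lin ?IH; last 2 first.
- exact: in_l2_delta.
- exact: in_l2_sum.
by apply: funext => j; rewrite big_cons.
Qed.

Definition Pr (s : {fset I}) (g : I -> R[i]) := fun j => if j \in s then g j else 0.
Definition Qr (s : {fset I}) (g : I -> R[i]) := fun j => if j \in s then 0 else g j.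

Lemma Pr_sum (s : {fset I}) g :
  Pr s g = (fun j => \sum_(k <- s) g k * delta k j).
Proof.
apply: funext => j; rewrite /Pr; case: ifPn => js.
  rewrite (big_fsetD1 _ js) /= /delta eqxx mulr1 big1_fset ?addr0 // => k.
  by rewrite !inE => /andP[kj _] _; rewrite eq_sym (negbTE kj) mulr0.
by rewrite big1_fset // => k ks _; rewrite /delta; case: eqP => [ek|]; [rewrite ek ks in js|rewrite mulr0].
Qed.

Lemma decomp (T : op) (s : {fset I}) g : bounded_op T -> in_l2 g ->
  T g = (fun j => T (fun j => \sum_(k <- s) g k * delta k j) j + T (Qr s g) j).
Proof.
move=> bT g2; have [_ lin _] := bT.
have E : g = (fun j => 1 * Pr s g j + Qr s g j).
  apply: funext => j; rewrite /Pr /Qr; case: ifP => _ /=; rewrite mul1r ?addr0 ?add0r //.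
rewrite [in LHS]E lin; last 2 first.
- by apply: in_l2_dom g2 => j; rewrite /Pr; case: ifP; rewrite ?sqmod0 ?sqmod_ge0.
- by apply: in_l2_dom g2 => j; rewrite /Qr; case: ifP; rewrite ?sqmod0 ?sqmod_ge0.
by apply: funext => j; rewrite mul1r Pr_sum.
Qed.

Lemma entry_decomp (T1 T2 : op) (s : {fset I}) (i : I) :
  bounded_op T1 -> bounded_op T2 ->
  op_entry (T1 \o T2) i i =
  \sum_(k <- s) T2 (delta i) k * T1 (delta k) i + T1 (Qr s (T2 (delta i))) i.
Proof.
move=> b1 b2; rewrite /op_entry /=.
have g2 : in_l2 (T2 (delta i)) by case: b2 => h _ _; apply: h; apply: in_l2_delta.
by rewrite (decomp _ s _ b1 g2) (op_sum _ _ _ b1).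
Qed.

Lemma trace_comm (T1 T2 : op) (s : {fset I}) : bounded_op T1 -> bounded_op T2 ->
  \sum_(i <- s) op_entry (T1 \o T2) i i - \sum_(i <- s) op_entry (T2 \o T1) i i
  = \sum_(i <- s) (T1 (Qr s (T2 (delta i))) i - T2 (Qr s (T1 (delta i))) i).
Proof.
move=> b1 b2.
rewrite (eq_bigr _ (fun i _ => entry_decomp _ _ s i b1 b2)).
rewrite (eq_bigr _ (fun i _ => entry_decomp _ _ s i b2 b1)).
rewrite !big_split /= sumrN.
rewrite [X in _ - (X + _)]exchange_big /=.
under [X in _ - (X + _)]eq_bigr do under eq_bigr do rewrite mulrC.
by rewrite opprD addrACA subrr add0r.
Qed.

Lemma sum_le_card (A : {fset I}) (w : I -> R) (C : R) :
  (forall i, `|w i| <= C) -> `|\sum_(i <- A) w i| <= (#|` A|)%:R * C.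
Proof.
move=> H; rewrite card_fset_sum1 natr_sum mulr_suml.
apply: le_trans (ler_norm_sum _ _ _) _.
by apply: ler_sum => i _; rewrite mul1r.
Qed.

Lemma card_diff (In : nat -> {fset I}) n : (In n `<=` In n.+1)%fset ->
  (#|` (In n.+1 `\` In n)%fset|)%:R = cardI In n.+1 - cardI In n :> R.
Proof.
by move=> sub; rewrite cardfsDS // natrB // fsubset_leq_card.
Qed.

Lemma sum_diff (In : nat -> {fset I}) n (v : I -> R) : (In n `<=` In n.+1)%fset ->
  \sum_(i <- In n.+1) v i = \sum_(i <- (In n.+1 `\` In n)%fset) v i + \sum_(i <- In n) v i.
Proof.
move=> sub; rewrite (big_fsetID _ (mem (In n))) /= addrC; congr (_ + _).
  by apply: eq_fbigl => x; rewrite !inE /= andbC.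
apply: eq_fbigl => x; rewrite !inE /=; apply/andP/idP => [[]//|xn].
by split=> //; apply: (fsubsetP sub).
Qed.

Lemma XR_sum (In : nat -> {fset I}) (v : I -> R) (C : R) :
  (forall n, (In n `<=` In n.+1)%fset) -> 0 < C -> (forall i, `|v i| <= C) ->
  XR In (fun n => \sum_(i <- In n) v i).
Proof.
move=> sub C0 vC; set u := fun n => _.
have ub n : `|u n| <= cardI In n * C by apply: sum_le_card.
have du n : `|u n.+1 - u n| <= (cardI In n.+1 - cardI In n) * C.
  rewrite /u (sum_diff _ _ _ (sub n)) addrK; apply: le_trans (sum_le_card _ _ _ vC) _.
  by rewrite (card_diff _ _ (sub n)).
have cpos n : 0 <= cardI In n :> R by rewrite /cardI ler0n.
have cinc n : 0 <= cardI In n.+1 - cardI In n :> R by rewrite -(card_diff _ _ (sub n)) ler0n.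
have C2 : 0 < 2 * C by rewrite mulr_gt0.
exists (fun n => C * cardI In n + u n), (fun n => C * cardI In n); split; last first.
- by apply: funext => n; rewrite addrAC subrr add0r.
- exists C, (cardI In); split; [exact: ltW| |by []].
  split; [exact: cpos|by rewrite cpos lexx|].
  by move=> n; rewrite (card_diff _ _ (sub n)) cinc lexx.
exists (2 * C), (fun n => (C * cardI In n + u n) / (2 * C)); split.
- exact: ltW.
- split.
  + move=> n; apply: divr_ge0; last exact: ltW.
    by have := ub n; rewrite ler_norml => /andP[h1 h2]; nra.
  + apply/andP; split.
      apply: divr_ge0; last exact: ltW.
      by have := ub 0%N; rewrite ler_norml => /andP[h1 h2]; nra.
    rewrite ler_pdivrMr //.
    by have := ub 0%N; rewrite ler_norml => /andP[h1 h2]; nra.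
  + move=> n; rewrite -mulrBl (card_diff _ _ (sub n)); apply/andP; split.
      apply: divr_ge0; last exact: ltW.
      by have := du n; rewrite ler_norml => /andP[h1 h2]; nra.
    rewrite ler_pdivrMr //.
    by have := du n; rewrite ler_norml => /andP[h1 h2]; nra.
- apply: funext => n; rewrite [RHS]mulrC divfK //; exact: lt0r_neq0.
Qed.

Definition opbound (T : op) (K : R) :=
  forall f, in_l2 f -> (l2norm2 (T f) <= K%:E * l2norm2 f)%E.

Lemma opK (T : op) : bounded_op T -> exists2 K, 0 <= K & opbound T K.
Proof.
case=> _ _ [K HK]; exists (Num.max K 0); first by rewrite le_max lexx orbT.
move=> f f2; apply: le_trans (HK f f2) _; apply: lee_wpmul2r.
  by apply: esum_ge0 => j _; rewrite lee_fin sqmod_ge0.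
by rewrite lee_fin le_max lexx.
Qed.

Lemma sq_bound (T : op) K f e i : 0 <= K -> opbound T K -> in_l2 f ->
  (l2norm2 f <= e%:E)%E -> sqmod (T f i) <= K * e.
Proof.
move=> K0 HK f2 fe; rewrite -lee_fin; apply: le_trans (l2_term _ i) _.
apply: le_trans (HK f f2) _; rewrite EFinM; exact: lee_wpmul2l.
Qed.

Lemma Qr_dom s (g : I -> R[i]) j : sqmod (Qr s g j) <= sqmod (g j).
Proof. by rewrite /Qr; case: ifP; rewrite ?sqmod0 ?sqmod_ge0. Qed.

Lemma Qr_delta (T2 : op) K2 s i : bounded_op T2 -> opbound T2 K2 ->
  in_l2 (Qr s (T2 (delta i))) /\ (l2norm2 (Qr s (T2 (delta i))) <= K2%:E)%E.
Proof.
move=> [h _ _] HK; have g2 : in_l2 (T2 (delta i)) by apply: h; apply: in_l2_delta.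
split; first exact: in_l2_dom _ _ (Qr_dom s _) g2.
apply: le_trans (l2_dom _ _ (Qr_dom s _)) _.
by apply: le_trans (HK _ (in_l2_delta i)) _; rewrite l2_delta mule1.
Qed.

Lemma Qr_small (d : I -> I -> R) s (g : I -> R[i]) i N :
  (forall j, j \notin s -> ~ (d j i <= N)) ->
  (l2norm2 (Qr s g) <= esum (~` ball_idx d N i) (fun j => (sqmod (g j))%:E))%E.
Proof.
move=> H; rewrite /l2norm2 [X in (_ <= X)%E]esum_mkcond; apply: le_esum => j _.
rewrite /Qr; case: ifPn => js.
  by rewrite sqmod0; case: ifP; rewrite // lee_fin sqmod_ge0.
rewrite ifT //; apply/mem_set => /=; exact: H.
Qed.

Lemma abs_le_C (x C : R) : x ^+ 2 <= C -> 1 <= C -> `|x| <= C.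
Proof. by move=> h1 h2; rewrite ler_norml; apply/andP; split; nra. Qed.

Lemma abs_le_d (x e : R) : x ^+ 2 <= e ^+ 2 -> 0 <= e -> `|x| <= e.
Proof. by move=> h1 h2; rewrite ler_norml; apply/andP; split; nra. Qed.

Lemma sum_cond_card (A : {fset I}) (P : pred I) (c : R) :
  \sum_(i <- A | P i) c = (#|` [fset i in A | P i]%fset|)%:R * c.
Proof.
rewrite big_fset_condE card_fset_sum1 natr_sum mulr_suml.
by apply: eq_bigr => i _; rewrite mul1r.
Qed.

Lemma sum_const_card (A : {fset I}) (c : R) :
  \sum_(i <- A) c = (#|` A|)%:R * c.
Proof.
rewrite card_fset_sum1 natr_sum mulr_suml.
by apply: eq_bigr => i _; rewrite mul1r.
Qed.

Lemma main_cvg (d : I -> I -> R) (In : nat -> {fset I}) (T1 T2 : op) (pr : R[i] -> R) :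
  uniform_metric_index_set d In -> bounded_op T1 -> bounded_op T2 ->
  row_nonexpansive d T1 -> row_nonexpansive d T2 ->
  (forall a b, pr (a + b) = pr a + pr b) -> (forall a, pr (- a) = - pr a) ->
  (forall z, pr z ^+ 2 <= sqmod z) ->
  (fun n => (pr (Defs.bseq In (T1 \o T2) n) - pr (Defs.bseq In (T2 \o T1) n)) / cardI In n)
    @ \oo --> 0.
Proof.
move=> [_ [_ _ dsym _] _ Hbd] b1 b2 r1 r2 prD prN prsq.
have pr0 : pr 0 = 0 by move: (prD 0 0); rewrite addr0 => h; lra.
have prsum (A : seq I) (F : I -> R[i]) : pr (\sum_(i <- A) F i) = \sum_(i <- A) pr (F i).
  by elim: A => [|x A IH]; rewrite ?big_nil ?pr0 // !big_cons prD IH.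
have [K1 K10 HK1] := opK _ b1; have [K2 K20 HK2] := opK _ b2.
apply/cvgr0Pnorm_lt => e e0.
set dl := e / 4.
have dl0 : 0 < dl by rewrite divr_gt0.
set eps := dl ^+ 2 / (K1 + K2 + 1).
have KK : 0 < K1 + K2 + 1 by rewrite ltr_wpDl // addr_ge0.
have eps0 : 0 < eps by rewrite divr_gt0 // exprn_gt0.
have K1eps : K1 * eps <= dl ^+ 2.
  rewrite /eps mulrA ler_pdivrMr //; have := sqr_ge0 dl; nra.
have K2eps : K2 * eps <= dl ^+ 2.
  rewrite /eps mulrA ler_pdivrMr //; have := sqr_ge0 dl; nra.
have [N1 HN1] := r1 eps eps0; have [N2 HN2] := r2 eps eps0.
set r := Num.max 1 (Num.max N1 N2).
have r0 : 0 < r by rewrite lt_max ltr01.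
have rN1 : N1 <= r by rewrite !le_max lexx orbT.
have rN2 : N2 <= r by rewrite !le_max lexx !orbT.
set C := 1 + K1 * K2.
have C1 : 1 <= C by rewrite lerDl mulr_ge0.
have C0 : 0 < C by apply: lt_le_trans C1.
have := Hbd r r0 => /cvgr0Pnorm_lt /(_ (e / (4 * C))) /(_ _).
have eC : 0 < e / (4 * C) by rewrite divr_gt0 // mulr_gt0.
move=> /(_ eC); apply: filterS => n hn.
have cge : 0 <= cardI In n :> R by rewrite /cardI ler0n.
rewrite le_eqVlt in cge; case/orP: cge => [/eqP c0|cpos].
  by rewrite -c0 invr0 mulr0 normr0.
rewrite normrM normfV (gtr0_norm cpos) ltr_pdivrMr //.
rewrite -prN -prD /Defs.bseq (trace_comm _ _ _ b1 b2) prsum.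
apply: le_lt_trans (ler_norm_sum _ _ _) _.
set P := fun i => `[< exists j, j \notin In n /\ d i j <= r >].
apply: (@le_lt_trans _ _ (\sum_(i <- In n) (if P i then 2 * C else 2 * dl))).
  apply: ler_sum => i _; rewrite prD prN; apply: le_trans (ler_normB _ _) _.
  have [f2 fK] := Qr_delta _ K2 (In n) i b2 HK2.
  have [g2 gK] := Qr_delta _ K1 (In n) i b1 HK1.
  case: ifPn => Pi.
    rewrite mulr2n mulrDl mul1r; apply: lerD; apply: abs_le_C => //.
      apply: le_trans (prsq _) _; apply: le_trans (sq_bound _ _ _ _ i K10 HK1 f2 fK) _.
      by rewrite lerDr.
    apply: le_trans (prsq _) _; apply: le_trans (sq_bound _ _ _ _ i K20 HK2 g2 gK) _.
      by rewrite /C; nra.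
  have Hj : forall (N : R), N <= r -> forall j, j \notin In n -> ~ (d j i <= N).
    move=> N Nr j jn djN; move/asboolPn: Pi; apply; exists j; split => //.
    by rewrite dsym; apply: le_trans Nr.
  rewrite mulr2n mulrDl mul1r; apply: lerD; (apply: abs_le_d; last exact: ltW dl0).
    apply: le_trans (prsq _) _; apply: le_trans K1eps.
    apply: (sq_bound _ _ _ _ i K10 HK1 f2).
    apply: le_trans (Qr_small d (In n) _ i N2 (Hj N2 rN2)) _.
    exact: ltW (HN2 i).
  apply: le_trans (prsq _) _; apply: le_trans K2eps.
  apply: (sq_bound _ _ _ _ i K20 HK2 g2).
  apply: le_trans (Qr_small d (In n) _ i N1 (Hj N1 rN1)) _.
  exact: ltW (HN1 i).
rewrite (bigID P) /=.
rewrite (eq_bigr (fun _ => 2 * C)); last by move=> i ->.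
rewrite [X in _ + X](eq_bigr (fun _ => 2 * dl)); last by move=> i Pi; rewrite (negbTE Pi).
rewrite sum_cond_card -/(boundary_idx d In r n).
apply: (@le_lt_trans _ _ ((#|` boundary_idx d In r n|)%:R * (2 * C) + cardI In n * (2 * dl))).
  apply: lerD => //; rewrite /cardI -sum_const_card big_mkcond /=.
  by apply: ler_sum => i _; case: ifP => // _; rewrite mulr_ge0 // ltW.
set B := (#|` boundary_idx d In r n|)%:R.
have hB : B < e / (4 * C) * cardI In n.
  by move: hn; rewrite normrM normfV (gtr0_norm cpos) ger0_norm ?ler0n // ltr_pdivrMr.
have hB2 : B * (2 * C) < e / (4 * C) * cardI In n * (2 * C).
  by rewrite ltr_pM2r // mulr_gt0.
have E : e / (4 * C) * cardI In n * (2 * C) = e * cardI In n / 2.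
  by field; rewrite ?lt0r_neq0.
rewrite E in hB2; rewrite /dl; lra.
Qed.

Lemma comp_bounded (T1 T2 : op) : bounded_op T1 -> bounded_op T2 -> bounded_op (T1 \o T2).
Proof.
move=> b1 b2; have [K1 K10 HK1] := opK _ b1; have [K2 K20 HK2] := opK _ b2.
case: b1 => h1 l1 _; case: b2 => h2 l2 _; split.
- by move=> f f2; apply: h1; apply: h2.
- by move=> a f g f2 g2; rewrite /= l2 // l1 //; [apply: h2|apply: h2].
- exists (K1 * K2) => f f2 /=; apply: le_trans (HK1 _ (h2 _ f2)) _.
  rewrite EFinM -muleA; apply: lee_wpmul2l; first by rewrite lee_fin.
  exact: HK2.
Qed.

Lemma entry_bound (T : op) : bounded_op T -> exists2 C, 1 <= C & forall i, sqmod (op_entry T i i) <= C.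
Proof.
move=> bT; have [K K0 HK] := opK _ bT; exists (1 + K); first by rewrite lerDl.
move=> i; apply: le_trans (_ : K * 1 <= _); last by rewrite mulr1 lerDr.
apply: sq_bound => //; first exact: in_l2_delta.
by rewrite l2_delta.
Qed.

Lemma XR_pr (In : nat -> {fset I}) (T : op) (pr : R[i] -> R) :
  (forall n, (In n `<=` In n.+1)%fset) -> bounded_op T ->
  (forall a b, pr (a + b) = pr a + pr b) -> (forall z, pr z ^+ 2 <= sqmod z) ->
  XR In (fun n => pr (Defs.bseq In T n)).
Proof.
move=> sub bT prD prsq.
have pr0 : pr 0 = 0 by move: (prD 0 0); rewrite addr0 => h; lra.
have -> : (fun n => pr (Defs.bseq In T n)) = (fun n => \sum_(i <- In n) pr (op_entry T i i)).
  apply: funext => n; rewrite /Defs.bseq.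
  by elim: (enum_fset (In n)) => [|x A IH]; rewrite ?big_nil ?pr0 // !big_cons prD IH.
have [C C1 HC] := entry_bound _ bT.
apply: (XR_sum _ _ C sub); first by apply: lt_le_trans C1.
by move=> i; apply: abs_le_C => //; apply: le_trans (prsq _) (HC i).
Qed.

End L.

Theorem lemma7p13 (R : realType) (I : countType) (d : I -> I -> R)
  (In : nat -> {fset I}) (W : topologicalType) (m : (nat -> R) -> W -> R) :
  uniform_metric_index_set d In ->
  compact [set: W] -> hausdorff_space W ->
  seq_measure_fun In m ->
  forall T1 T2 : (I -> R[i]) -> I -> R[i],
    bounded_op T1 -> bounded_op T2 ->
    nonexpansive d T1 -> nonexpansive d T2 ->
    op_measure In m (T1 \o T2) = op_measure In m (T2 \o T1).
Proof.
move=> U _ _ [_ _ meq _ _] T1 T2 b1 b2 [r1 _] [r2 _].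
have sub : forall n, (In n `<=` In n.+1)%fset by case: U => [[h _] _ _ _].
have b12 := comp_bounded _ _ b1 b2; have b21 := comp_bounded _ _ b2 b1.
have ReD : forall a b : R[i], complex.Re (a + b) = complex.Re a + complex.Re b by case=> ? ? [].
have ImD : forall a b : R[i], complex.Im (a + b) = complex.Im a + complex.Im b by case=> ? ? [].
have ReN : forall a : R[i], complex.Re (- a) = - complex.Re a by case.
have ImN : forall a : R[i], complex.Im (- a) = - complex.Im a by case.
have ER : m (fun n => complex.Re (Defs.bseq In (T1 \o T2) n)) =
          m (fun n => complex.Re (Defs.bseq In (T2 \o T1) n)).
  apply/(meq _ _ (XR_pr _ _ _ sub b12 ReD Re_sq) (XR_pr _ _ _ sub b21 ReD Re_sq)).
  exact: (main_cvg _ _ _ _ _ U b1 b2 r1 r2 ReD ReN Re_sq).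
have EI : m (fun n => complex.Im (Defs.bseq In (T1 \o T2) n)) =
          m (fun n => complex.Im (Defs.bseq In (T2 \o T1) n)).
  apply/(meq _ _ (XR_pr _ _ _ sub b12 ImD Im_sq) (XR_pr _ _ _ sub b21 ImD Im_sq)).
  exact: (main_cvg _ _ _ _ _ U b1 b2 r1 r2 ImD ImN Im_sq).
by apply: funext => w; rewrite /op_measure ER EI.
Qed.
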